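(* Let $\Gamma=(V,E)$ be a simple graph of order $n$ and size $m$. Then the global dual alliance number of $\Gamma$ satisfies $$\gamma_{a_d}(\Gamma)\ge \left\lceil\frac{\sqrt{2m+n}}{2}\right\rceil$$ and the global strong dual alliance number of $\Gamma$ satisfies $$\gamma_{\hat{a}_d}(\Gamma)\ge \left\lceil\frac{1+\sqrt{1+8(n+m)}}{4}\right\rceil.$$
   Context: For $S\subseteq V$ and $v\in V$, $N_S(v)=\{u\in S: u\sim v\}$ and $N_{V\setminus S}(v)=\{u\in V\setminus S: u\sim v\}$. A nonempty set $S\subseteq V$ is a global dual alliance if (i) $|N_S(v)|+1\ge |N_{V\setminus S}(v)|$ for every $v\in S$ and (ii) $|N_S(v)|\ge |N_{V\setminus S}(v)|+1$ for every $v\in V\setminus S$. It is a global strong dual alliance if (i') $|N_S(v)|\ge |N_{V\setminus S}(v)|$ for every $v\in S$ and (ii') $|N_S(v)|\ge |N_{V\setminus S}(v)|+2$ for every $v\in V\setminus S$. $\gamma_{a_d}(\Gamma)$ (resp. $\gamma_{\hat a_d}(\Gamma)$) is the minimum cardinality of a global dual (resp. global strong dual) alliance. *)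

(* Defs.v *)
From mathcomp Require Import all_boot all_order all_algebra.
From mathcomp Require Import reals.
Set Implicit Arguments. Unset Strict Implicit. Unset Printing Implicit Defensive.

Definition simple_graph (T : finType) (adj : rel T) : Prop :=
  symmetric adj /\ irreflexive adj.

Definition nbhd_in (T : finType) (adj : rel T) (S : {set T}) (v : T) : {set T} :=
  [set u in S | adj u v].

Definition edges (T : finType) (adj : rel T) : {set {set T}} :=
  [set e : {set T} | [exists x, exists y, adj x y && (e == [set x; y])]].

(* order n = #|T|, size m = #|edges adj| *)

Definition global_dual_alliance (T : finType) (adj : rel T) (S : {set T}) : bool :=
  (S != set0) &&
  [forall v in S,
     #|nbhd_in adj (~: S) v| <= #|nbhd_in adj S v| + 1]%N &&
  [forall v in ~: S,
     #|nbhd_in adj (~: S) v| + 1 <= #|nbhd_in adj S v|]%N.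

Definition global_strong_dual_alliance (T : finType) (adj : rel T) (S : {set T}) : bool :=
  (S != set0) &&
  [forall v in S,
     #|nbhd_in adj (~: S) v| <= #|nbhd_in adj S v|]%N &&
  [forall v in ~: S,
     #|nbhd_in adj (~: S) v| + 2 <= #|nbhd_in adj S v|]%N.

(* The default
   value #|T| of the min is attained by S = V whenever V is nonempty
   (V is always a global (strong) dual alliance when nonempty), so for
   n >= 1 these are exactly the paper's gamma_{a_d} and gamma_{\hat a_d}.
   For the empty graph they are 0. *)
Definition gamma_ad (T : finType) (adj : rel T) : nat :=
  \big[minn/#|T|]_(S : {set T} | global_dual_alliance adj S) #|S|.

Definition gamma_strong_ad (T : finType) (adj : rel T) : nat :=
  \big[minn/#|T|]_(S : {set T} | global_strong_dual_alliance adj S) #|S|.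

(* Main.v *)
Require Import Defs.
From mathcomp Require Import all_boot all_order all_algebra.
From mathcomp Require Import reals zify ring.
Import Order.TTheory GRing.Theory Num.Theory.

Lemma card_nb (T : finType) (adj : rel T) S v :
  #|nbhd_in adj S v| = \sum_(u in S) (adj u v : nat).
Proof.
rewrite /nbhd_in -sum1_card.
rewrite (eq_bigl (fun u => (u \in S) && adj u v)); last by move=> u; rewrite inE.
rewrite big_mkcondr /=; apply: eq_bigr => u _; by case: (adj u v).
Qed.

Lemma nb_sym (T : finType) (adj : rel T) (A B : {set T}) : symmetric adj ->
  \sum_(v in A) #|nbhd_in adj B v| = \sum_(v in B) #|nbhd_in adj A v|.
Proof.
move=> sym.
under eq_bigr do rewrite card_nb.
rewrite exchange_big /=; apply: eq_bigr => u _; rewrite card_nb.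
by apply: eq_bigr => v _; rewrite sym.
Qed.

Lemma sumT_split (T : finType) (S : {set T}) (F : T -> nat) :
  \sum_(v in setT) F v = \sum_(v in S) F v + \sum_(v in ~:S) F v.
Proof. by rewrite (big_setID S) setTI setTD. Qed.

Lemma handshake (T : finType) (adj : rel T) : simple_graph adj ->
  (2 * #|edges adj| <= \sum_(v in setT) #|nbhd_in adj setT v|)%N.
Proof.
case=> sym irr.
have -> : (2 * #|edges adj| = \sum_(e in edges adj) #|e|)%N.
  rewrite mulnC -sum_nat_const; apply: eq_big => // e.
  rewrite inE => /existsP[x /existsP[y /andP[axy /eqP->]]].
  rewrite cards2; case: eqVneq axy => // ->; by rewrite irr.
have -> : (\sum_(e in edges adj) #|e| = \sum_(e in edges adj) \sum_(x in setT) (x \in e : nat))%N.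
  apply: eq_bigr => e _; rewrite -sum1_card [LHS]big_mkcond [RHS]big_mkcond /=.
  apply: eq_bigr => x _; by rewrite inE; case: (x \in e).
rewrite exchange_big /=; apply: leq_sum => x _.
have -> : (\sum_(e in edges adj) (x \in e : nat) = #|[set e in edges adj | x \in e]|)%N.
  rewrite -sum1_card [RHS]big_mkcond [LHS]big_mkcond /=; apply: eq_bigr => e _.
  rewrite [in RHS]in_set; by case: (e \in edges adj); case: (x \in e).
apply: leq_trans (leq_imset_card (fun y => [set x; y]) _).
apply: subset_leq_card; apply/subsetP => e; rewrite inE => /andP[].
rewrite inE => /existsP[a /existsP[b /andP[ab /eqP->]]].
rewrite !inE => /orP[]/eqP->.
  apply/imsetP; exists b => //; by rewrite !inE sym.
apply/imsetP; exists a; first by rewrite !inE.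
by rewrite setUC.
Qed.
Local Open Scope nat_scope.

Lemma key (T : finType) (adj : rel T) (S : {set T}) : simple_graph adj ->
  let a := fun v => #|nbhd_in adj S v| in
  let b := fun v => #|nbhd_in adj (~:S) v| in
  [/\ (2 * #|edges adj| <= \sum_(v in S) a v + \sum_(v in S) b v + \sum_(v in ~:S) a v + \sum_(v in ~:S) b v)%N,
      \sum_(v in ~:S) a v = \sum_(v in S) b v,
      (\sum_(v in S) a v <= #|S| * #|S|.-1)%N &
      #|S| + #|~:S| = #|T| ].
Proof.
move=> G a b; case: (G) => sym irr; split; last by rewrite cardsC.
- apply: (leq_trans (@handshake T adj G)).
  have -> : \sum_(v in setT) #|nbhd_in adj setT v| = \sum_(v in setT) (a v + b v).
    apply: eq_bigr => v _; rewrite /a /b !card_nb.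
    by rewrite (@sumT_split T S).
  by rewrite (@sumT_split T S) !big_split /= !addnA.
- exact: nb_sym.
- rewrite -sum_nat_const; apply: leq_sum => v vS.
  rewrite (cardsD1 v S) vS add1n /= /a.
  apply: subset_leq_card; apply/subsetP => u; rewrite !inE => /andP[uS auv].
  rewrite uS andbT; apply/eqP => E; move: auv; by rewrite E irr.
Qed.

Lemma dual_bound (T : finType) (adj : rel T) (S : {set T}) : simple_graph adj ->
  global_dual_alliance adj S -> (2 * #|edges adj| + #|T| <= 4 * (#|S| * #|S|))%N.
Proof.
move=> G /andP[/andP[S0 /forall_inP H1] /forall_inP H2].
have [E1 E2 E3 E4] := @key T adj S G.
have s1 : (0 < #|S|)%N by rewrite card_gt0.
have C1 : (\sum_(v in ~:S) #|nbhd_in adj (~:S) v| + #|~:S| <= \sum_(v in ~:S) #|nbhd_in adj S v|)%N.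
  rewrite -sum1_card -big_split; apply: leq_sum => v /H2 //.
have C2 : (\sum_(v in S) #|nbhd_in adj (~:S) v| <= \sum_(v in S) #|nbhd_in adj S v| + #|S|)%N.
  rewrite -sum1_card -big_split; apply: leq_sum => v /H1 //.
move: E1 E2 E3 E4 C1 C2.
set A := \sum_(v in S) _; set B := \sum_(v in S) _; set C := \sum_(v in ~:S) #|nbhd_in adj S _|.
set D := \sum_(v in ~:S) _.
move: A B C D => A B C D.
case: #|S| s1 => // s _.
nia.
Qed.

Lemma strong_bound (T : finType) (adj : rel T) (S : {set T}) : simple_graph adj ->
  global_strong_dual_alliance adj S -> (1 + 8 * (#|T| + #|edges adj|) <= (4 * #|S|).-1 * (4 * #|S|).-1)%N.
Proof.
move=> G /andP[/andP[S0 /forall_inP H1] /forall_inP H2].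
have [E1 E2 E3 E4] := @key T adj S G.
have s1 : (0 < #|S|)%N by rewrite card_gt0.
have C1 : (\sum_(v in ~:S) #|nbhd_in adj (~:S) v| + #|~:S| * 2 <= \sum_(v in ~:S) #|nbhd_in adj S v|)%N.
  rewrite -sum_nat_const -big_split; apply: leq_sum => v /H2 //.
have C2 : (\sum_(v in S) #|nbhd_in adj (~:S) v| <= \sum_(v in S) #|nbhd_in adj S v|)%N.
  apply: leq_sum => v /H1 //.
move: E1 E2 E3 E4 C1 C2.
set A := \sum_(v in S) _; set B := \sum_(v in S) _; set C := \sum_(v in ~:S) #|nbhd_in adj S _|.
set D := \sum_(v in ~:S) _.
move: A B C D => A B C D.
case: #|S| s1 => // s _.
nia.
Qed.
Local Open Scope ring_scope.

Lemma real_aux (R: realType) (N K : nat) : (N <= K*K)%N -> Num.sqrt (N%:R : R) <= K%:R.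
Proof.
move=> h; rewrite -(ger0_norm (ler0n R K)) -sqrtr_sqr ler_sqrt ?exprn_ge0 //.
by rewrite expr2 -natrM ler_nat.
Qed.



Theorem theorem9 (R : realType) (T : finType) (adj : rel T) :
  simple_graph adj -> (0 < #|T|)%N ->
  Num.ceil (Num.sqrt ((2 * #|edges adj| + #|T|)%N%:R : R) / 2)
    <= (gamma_ad adj)%:Z /\
  Num.ceil ((1 + Num.sqrt (1 + 8 * (#|T| + #|edges adj|)%N%:R : R)) / 4)
    <= (gamma_strong_ad adj)%:Z.
Proof.
move=> G n0.
have e : forall v, nbhd_in adj set0 v = set0.
  by move=> v; apply/setP => u; rewrite !inE.
have ne : (setT : {set T}) != set0 by rewrite -card_gt0 cardsT.
have Td : global_dual_alliance adj setT.
  rewrite /global_dual_alliance ne /= setCT; apply/andP; split; apply/forall_inP => v;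
  rewrite ?inE // => _; by rewrite e cards0.
have Ts : global_strong_dual_alliance adj setT.
  rewrite /global_strong_dual_alliance ne /= setCT; apply/andP; split; apply/forall_inP => v;
  rewrite ?inE // => _; by rewrite e cards0.
split.
- have : (2 * #|edges adj| + #|T| <= 4 * (gamma_ad adj * gamma_ad adj))%N.
    rewrite /gamma_ad; apply: (big_ind (fun k => 2 * #|edges adj| + #|T| <= 4 * (k * k))%N).
    + by have := @dual_bound T adj setT G Td; rewrite cardsT.
    + move=> x y hx hy; rewrite /minn; by case: ifP.
    + move=> S; exact: (@dual_bound T adj S G).
  move=> h; rewrite Num.Theory.ceil_le_int ler_pdivrMr // -natrM.
  apply: real_aux; rewrite mulnC; nia.
- have : (1 + 8 * (#|T| + #|edges adj|) <= (4 * gamma_strong_ad adj).-1 * (4 * gamma_strong_ad adj).-1)%N /\ (0 < gamma_strong_ad adj)%N.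
    rewrite /gamma_strong_ad; apply: (big_ind (fun k => (1 + 8 * (#|T| + #|edges adj|) <= (4 * k).-1 * (4 * k).-1)%N /\ (0 < k)%N)).
    + by split => //; have := @strong_bound T adj setT G Ts; rewrite cardsT.
    + move=> x y hx hy; rewrite /minn; by case: ifP.
    + move=> S hS; split; first exact: (@strong_bound T adj S G).
      by case/andP: hS => /andP[]; rewrite card_gt0.
  case=> h g0; rewrite Num.Theory.ceil_le_int ler_pdivrMr //. 
  have -> : 1 + 8 * (#|T| + #|edges adj|)%:R = (1 + 8 * (#|T| + #|edges adj|))%N%:R :> R.
    by rewrite !(natrD, natrM).
  rewrite -lerBrDl.
  have -> : (gamma_strong_ad adj)%:~R * 4 - 1 = ((4 * gamma_strong_ad adj).-1)%:R :> R.
    move: g0; case: (gamma_strong_ad adj) => // k _.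
    have -> : (4 * k.+1).-1 = (4 * k + 3)%N by lia.
    rewrite -pmulrn natrD natrM mulrSr; ring.
  exact: real_aux.
Qed.
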